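(* Let $\delta_1,\delta_2,\delta_3>0$ with $\delta_3>2\delta_2$. There is a constant $C$ such that for all $n\ge1$, on the event $A_n$, $$|I_n^0|\le C\,n^{-\frac34+\frac{\delta_1}{2}}.$$
   Context: $Y$ is a simple symmetric random walk on $\mathbb Z$ with $Y_0=0$, with local time $\eta_n(y)=\sum_{k=0}^n\mathbf 1_{\{Y_k=y\}}$. $A_n=\{\max_{0\le k\le2n}|Y_k|<n^{1/2+\delta_1}\}\cap\{\max_{y\in\mathbb Z}\eta_{2n-1}(y)<n^{1/2+\delta_2}\}$. Set $d_{n,3}=n^{1/2+\delta_3}$, $b_n=n^{\delta_2}/d_{n,3}$, and $$I_n^0=\int_{|t|\le b_n}\prod_{y\in\mathbb Z}\cos\big(\eta_{2n-1}(y)\,t\big)\,e^{-t^2d_{n,3}^2/2}\,dt$$ (only finitely many factors differ from $1$). *)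

(* Defs.v *)
From Stdlib Require Import Reals ZArith List Lra Lia.
From Coquelicot Require Import Coquelicot.
Open Scope R_scope.

Definition srw_path (Y : nat -> Z) : Prop :=
  Y 0%nat = 0%Z /\ forall k : nat, Z.abs (Y (S k) - Y k) = 1%Z.

Definition local_time (Y : nat -> Z) (m : nat) (y : Z) : nat :=
  length (filter (fun k => Z.eqb (Y k) y) (seq 0 (S m))).

Definition event_A (d1 d2 : R) (Y : nat -> Z) (n : nat) : Prop :=
  (forall k : nat, (k <= 2 * n)%nat ->
     IZR (Z.abs (Y k)) < Rpower (INR n) (1/2 + d1)) /\
  (forall y : Z, INR (local_time Y (2 * n - 1) y) < Rpower (INR n) (1/2 + d2)).

Definition d_n3 (d3 : R) (n : nat) : R := Rpower (INR n) (1/2 + d3).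
Definition b_n (d2 d3 : R) (n : nat) : R := Rpower (INR n) d2 / d_n3 d3 n.

(* The sites y in [-2n, 2n]; the walk up to time 2n-1 never leaves this
   window, so every factor cos(eta_{2n-1}(y) t) with y outside it equals 1. *)
Definition sites (n : nat) : list Z :=
  map (fun i => (Z.of_nat i - Z.of_nat (2 * n))%Z) (seq 0 (4 * n + 1)).

Definition prod_cos (Y : nat -> Z) (n : nat) (t : R) : R :=
  fold_right Rmult 1
    (map (fun y => cos (INR (local_time Y (2 * n - 1) y) * t)) (sites n)).

Definition I0 (d2 d3 : R) (Y : nat -> Z) (n : nat) : R :=
  RInt (fun t => prod_cos Y n t * exp (- (t ^ 2 * (d_n3 d3 n) ^ 2) / 2))
       (- b_n d2 d3 n) (b_n d2 d3 n).

(* Main.v *)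
Require Import Defs.
From Stdlib Require Import Reals ZArith List Lra Lia Psatz.
From Coquelicot Require Import Coquelicot.
Open Scope R_scope.

Lemma cos_small (x : R) : Rabs x <= 1 -> 0 <= cos x <= 1 / (1 + x ^ 2 / 4).
Proof.
  intro H. assert (Hx : -1 <= x <= 1) by (unfold Rabs in H; destruct Rcase_abs in H; lra).
  pose proof PI2_1. split.
  - apply cos_ge_0; lra.
  - assert (Hc : cos x <= 1 - x ^ 2 / 2 + x ^ 4 / 24).
    { destruct (cos_bound x 0) as [_ H2]; try lra.
      unfold cos_approx, cos_term in H2. simpl in H2. lra. }
    assert (H4 : x^4 <= x^2) by (assert (x^2 <= 1) by nra; assert (0<=x^2) by nra; replace (x^4) with (x^2*x^2) by ring; nra).
    assert (0 <= x^2) by nra.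
    apply Rle_trans with (1 - x^2/4); [lra|].
    replace (1/(1+x^2/4)) with ((1 - x^2/4) + (x^2/4)^2/(1+x^2/4)) by (field; lra).
    assert (0 <= (x^2/4)^2/(1+x^2/4)) by (apply Rmult_le_pos; [nra| left; apply Rinv_0_lt_compat; lra]).
    lra.
Qed.

Definition lsum {A} (l : list A) (f : A -> R) : R := fold_right (fun x acc => f x + acc) 0 l.

Lemma lsum_ext {A} (l : list A) f g : (forall x, In x l -> f x = g x) -> lsum l f = lsum l g.
Proof. induction l as [|a l IH]; simpl; intros H; [reflexivity|].
  rewrite H by auto. rewrite IH by auto. reflexivity. Qed.

Lemma lsum_le {A} (l : list A) f g : (forall x, In x l -> f x <= g x) -> lsum l f <= lsum l g.
Proof. induction l as [|a l IH]; simpl; intros H; [lra|].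
  specialize (IH (fun x h => H x (or_intror h))). specialize (H a (or_introl eq_refl)). lra. Qed.

Lemma lsum_plus {A} (l : list A) f g : lsum l (fun x => f x + g x) = lsum l f + lsum l g.
Proof. induction l as [|a l IH]; simpl; [lra|]. rewrite IH. lra. Qed.

Lemma lsum_scal {A} (l : list A) c f : lsum l (fun x => c * f x) = c * lsum l f.
Proof. induction l as [|a l IH]; simpl; [lra|]. rewrite IH. lra. Qed.

Lemma lsum_zero {A} (l : list A) : lsum l (fun _ => 0) = 0.
Proof. induction l as [|a l IH]; simpl; lra. Qed.

Lemma lsum_swap {A B} (l1 : list A) (l2 : list B) F :
  lsum l1 (fun x => lsum l2 (fun y => F x y)) = lsum l2 (fun y => lsum l1 (fun x => F x y)).
Proof. induction l1 as [|a l IH]; simpl.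
  - symmetry. apply lsum_zero.
  - rewrite IH. rewrite <- lsum_plus. reflexivity. Qed.

Lemma INR_filter {A} (p : A -> bool) l :
  INR (length (filter p l)) = lsum l (fun k => if p k then 1 else 0).
Proof. induction l as [|a l IH]; [reflexivity|]. cbn [filter lsum fold_right].
  destruct (p a); [cbn [length]; rewrite S_INR|]; fold (lsum l (fun k => if p k then 1 else 0)); rewrite <- IH; lra. Qed.

Lemma lsum_notin (l : list Z) z (g : Z -> R) : ~ In z l ->
  lsum l (fun y => if Z.eqb z y then g y else 0) = 0.
Proof. induction l as [|a l IH]; simpl; intros H; [reflexivity|].
  destruct (Z.eqb_spec z a); [exfalso; auto|]. rewrite IH by auto. lra. Qed.

Lemma lsum_delta (l : list Z) z (g : Z -> R) : NoDup l -> In z l ->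
  lsum l (fun y => if Z.eqb z y then g y else 0) = g z.
Proof. induction l as [|a l IH]; simpl; intros Hn Hi; [contradiction|].
  inversion Hn; subst.
  destruct (Z.eqb_spec z a).
  - subst. rewrite lsum_notin by auto. lra.
  - destruct Hi; [congruence|]. rewrite IH by auto. lra. Qed.

Lemma prod_bound {A} (l : list A) (c v : A -> R) :
  (forall y, In y l -> 0 <= v y /\ 0 <= c y <= 1/(1+v y)) ->
  0 <= lsum l v /\ 0 <= fold_right Rmult 1 (map c l) <= 1/(1 + lsum l v).
Proof.
  induction l as [|a l IH]; simpl; intros H.
  - split; [lra|]. split; [lra|]. lra.
  - destruct (IH (fun y h => H y (or_intror h))) as [H1 [H2 H3]].
    destruct (H a (or_introl eq_refl)) as [H4 [H5 H6]].
    set (P := fold_right Rmult 1 (map c l)) in *.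
    set (V := lsum l v) in *.
    split; [lra|]. split; [apply Rmult_le_pos; lra|].
    apply Rle_trans with (1/(1+v a) * (1/(1+V))).
    + apply Rmult_le_compat; lra.
    + replace (1 / (1 + v a) * (1 / (1 + V))) with (1/((1+v a)*(1+V))) by (field; lra).
      apply Rmult_le_compat_l; [lra|]. apply Rinv_le_contravar; [lra|]. nra.
Qed.

Lemma walk_bound Y : srw_path Y -> forall k, (Z.abs (Y k) <= Z.of_nat k)%Z.
Proof. intros [H0 H1] k. induction k as [|k IH].
  - rewrite H0. simpl. lia.
  - specialize (H1 k). rewrite Nat2Z.inj_succ. lia. Qed.

Lemma in_sites n z : (Z.abs z <= Z.of_nat (2 * n))%Z -> In z (sites n).
Proof. intro H. unfold sites. apply in_map_iff.
  exists (Z.to_nat (z + Z.of_nat (2 * n))). split.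
  - rewrite Z2Nat.id by lia. lia.
  - apply in_seq. lia. Qed.

Lemma nodup_sites n : NoDup (sites n).
Proof. unfold sites. apply NoDup_map_NoDup_ForallPairs; [|apply seq_NoDup].
  intros x y _ _ H. lia. Qed.

Lemma lsum_map {A B} (f : A -> B) l g : lsum (map f l) g = lsum l (fun x => g (f x)).
Proof. induction l as [|a l IH]; simpl; [reflexivity|]. rewrite IH. reflexivity. Qed.

Lemma lsum_const {A} (l : list A) c : lsum l (fun _ => c) = INR (length l) * c.
Proof. induction l as [|a l IH]; [simpl; lra|]. cbn [length lsum fold_right].
  fold (lsum l (fun _ => c)). rewrite IH, S_INR. lra. Qed.

Definition eta (Y : nat -> Z) n y := INR (local_time Y (2 * n - 1) y).

Lemma exchange Y n (g : Z -> R) : (1 <= n)%nat -> srw_path Y ->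
  lsum (sites n) (fun y => eta Y n y * g y) = lsum (seq 0 (2 * n)) (fun k => g (Y k)).
Proof.
  intros Hn HY.
  assert (E : S (2 * n - 1) = (2 * n)%nat) by lia.
  unfold eta, local_time. rewrite E.
  rewrite (lsum_ext _ _ (fun y => lsum (seq 0 (2*n)) (fun k => if Z.eqb (Y k) y then g y else 0))).
  - rewrite lsum_swap. apply lsum_ext. intros k Hk.
    apply lsum_delta; [apply nodup_sites|]. apply in_sites.
    apply in_seq in Hk. pose proof (walk_bound Y HY k). lia.
  - intros y _. rewrite INR_filter. rewrite Rmult_comm, <- lsum_scal.
    apply lsum_ext. intros k _. destruct (Z.eqb (Y k) y); lra.
Qed.

Definition wM (M : R) (y : Z) : R := if Rlt_dec (IZR (Z.abs y)) M then 1 else 0.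

Lemma count_gen M c m s : 0 < M ->
  lsum (seq s m) (fun i => wM M (Z.of_nat i - c)) <=
  Rmax 0 (M - Rmax (IZR (Z.of_nat s - c)) (- M) + 1).
Proof.
  intros HM. revert s. induction m as [|m IH]; intros s.
  - simpl. apply Rmax_l.
  - cbn [seq lsum fold_right]. fold (lsum (seq (S s) m) (fun i => wM M (Z.of_nat i - c))).
    specialize (IH (S s)).
    replace (IZR (Z.of_nat (S s) - c)) with (IZR (Z.of_nat s - c) + 1) in IH
      by (rewrite Nat2Z.inj_succ, <- plus_IZR; f_equal; lia).
    set (x := IZR (Z.of_nat s - c)) in *.
    assert (Hw : wM M (Z.of_nat s - c) = if Rlt_dec (Rabs x) M then 1 else 0)
      by (unfold wM; rewrite abs_IZR; reflexivity).
    rewrite Hw.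
    set (T := lsum (seq (S s) m) (fun i => wM M (Z.of_nat i - c))) in *.
    destruct (Rlt_dec (Rabs x) M) as [h|h].
    + assert (-M < x < M) by (unfold Rabs in h; destruct Rcase_abs in h; lra).
      rewrite (Rmax_left (x+1)) in IH by lra. rewrite (Rmax_left x) by lra.
      rewrite Rmax_right in IH by lra. rewrite Rmax_right by lra. lra.
    + destruct (Rle_dec x (-M)).
      * rewrite (Rmax_right x) by lra.
        apply Rle_trans with (1 := Rplus_le_compat_l 0 _ _ IH).
        rewrite Rplus_0_l. apply Rle_max_compat_l. pose proof (Rmax_r (x+1) (-M)). lra.
      * assert (M <= x) by (unfold Rabs in h; destruct Rcase_abs in h; lra).
        rewrite (Rmax_left x) by lra. rewrite (Rmax_left (x+1)) in IH by lra.
        rewrite Rmax_left in IH by lra. pose proof (Rmax_l 0 (M - x + 1)). lra.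
Qed.

Lemma count_sites M n : 0 < M -> lsum (sites n) (wM M) <= 2 * M + 1.
Proof. intros HM. unfold sites. rewrite lsum_map.
  eapply Rle_trans; [apply count_gen; exact HM|].
  apply Rmax_lub; [lra|]. pose proof (Rmax_r (IZR (Z.of_nat 0 - Z.of_nat (2 * n))) (- M)). lra. Qed.

Lemma S_lower Y n M : (1 <= n)%nat -> srw_path Y -> 1 <= M ->
  (forall k, (k <= 2 * n)%nat -> IZR (Z.abs (Y k)) < M) ->
  4 * INR n ^ 2 <= 3 * M * lsum (sites n) (fun y => eta Y n y ^ 2).
Proof.
  intros Hn HY HM HA.
  set (N := INR n).
  assert (HN : 1 <= N) by (unfold N; apply (le_INR 1); exact Hn).
  set (S := lsum (sites n) (fun y => eta Y n y ^ 2)).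
  set (W := lsum (sites n) (wM M)).
  assert (HW : W <= 3 * M) by (pose proof (count_sites M n); unfold W; lra).
  assert (H1 : lsum (sites n) (fun y => eta Y n y * wM M y) = 2 * N).
  { rewrite exchange by assumption.
    rewrite (lsum_ext _ _ (fun _ => 1)).
    - rewrite lsum_const, length_seq, mult_INR. simpl. unfold N. lra.
    - intros k Hk. apply in_seq in Hk. unfold wM.
      destruct (Rlt_dec _ _) as [|h]; [reflexivity|]. exfalso. apply h. apply HA. lia. }
  set (c := 2 * N / (3 * M)).
  assert (Hc : 0 < c) by (unfold c; apply Rdiv_lt_0_compat; lra).
  assert (H2 : lsum (sites n) (fun y => eta Y n y * wM M y) <=
               lsum (sites n) (fun y => / (2 * c) * eta Y n y ^ 2 + c / 2 * wM M y)).
  { apply lsum_le. intros y _. unfold wM. destruct (Rlt_dec _ _).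
    - assert (0 <= (eta Y n y - c) ^ 2) by apply pow2_ge_0.
      apply Rminus_le. 
      replace (eta Y n y * 1 - (/ (2 * c) * eta Y n y ^ 2 + c / 2 * 1))
        with (- ((eta Y n y - c) ^ 2 / (2 * c))) by (field; lra).
      assert (0 <= (eta Y n y - c) ^ 2 / (2 * c)) by (apply Rdiv_le_0_compat; lra).
      lra.
    - assert (0 <= / (2 * c) * eta Y n y ^ 2)
        by (apply Rmult_le_pos; [left; apply Rinv_0_lt_compat; lra | apply pow2_ge_0]). lra. }
  rewrite lsum_plus, lsum_scal, lsum_scal, H1 in H2. fold S W in H2.
  assert (HS : 0 <= S) by (unfold S; rewrite <- (lsum_zero (sites n)); apply lsum_le; intros; apply pow2_ge_0).
  (* 2N <= S/(2c) + c W/2 <= S/(2c) + N *)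
  assert (H3 : c / 2 * W <= N).
  { apply Rle_trans with (c / 2 * (3 * M)); [apply Rmult_le_compat_l; lra|].
    unfold c. right. field. lra. }
  assert (H4 : N <= / (2 * c) * S) by lra.
  unfold c in H4.
  replace (/ (2 * (2 * N / (3 * M))) * S) with (3 * M * S / (4 * N)) in H4 by (field; lra).
  apply (Rmult_le_compat_r (4 * N)) in H4; [|lra].
  replace (3 * M * S / (4 * N) * (4 * N)) with (3 * M * S) in H4 by (field; lra).
  fold N. lra.
Qed.

Lemma prod_derive (h : Z -> R) (l : list Z) t :
  ex_derive (fun t => fold_right Rmult 1 (map (fun y => cos (h y * t)) l)) t.
Proof. induction l as [|a l IH]; simpl.
  - apply ex_derive_const.
  - apply ex_derive_mult; [auto_derive; trivial|exact IH]. Qed.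

Lemma exp_le_1 x : x <= 0 -> exp x <= 1.
Proof. intros H. destruct (Req_dec x 0) as [->|h]; [rewrite exp_0; lra|].
  rewrite <- exp_0. left. apply exp_increasing. lra. Qed.

Lemma atan_int a b : 0 < a -> 0 <= b ->
  is_RInt (fun t => 1 / (1 + a * t ^ 2)) (- b) b
    ((atan (sqrt a * b) - atan (sqrt a * (- b))) / sqrt a).
Proof.
  intros Ha Hb. set (r := sqrt a).
  assert (Hr : 0 < r) by (apply sqrt_lt_R0; exact Ha).
  assert (Hr2 : r * r = a) by (apply sqrt_sqrt; lra).
  replace ((atan (r * b) - atan (r * - b)) / r)
    with (minus ((fun t => atan (r * t) / r) b) ((fun t => atan (r * t) / r) (- b)))
    by (unfold minus, plus, opp; simpl; field; lra).
  apply (is_RInt_derive (fun t => atan (r * t) / r) (fun t => 1 / (1 + a * t ^ 2))).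
  - intros x _. auto_derive; [trivial|].
    rewrite <- Hr2. assert (0 <= (r*x)*(r*x)) by nra. field; repeat split; nra.
  - intros x _. apply (ex_derive_continuous (fun t => 1 / (1 + a * t ^ 2))). auto_derive. nra.
Qed.

Lemma Rpower_pos x y : 0 < Rpower x y.
Proof. unfold Rpower. apply exp_pos. Qed.

Theorem lemma6 (d1 d2 d3 : R) :
  0 < d1 -> 0 < d2 -> 0 < d3 -> d3 > 2 * d2 ->
  exists C : R,
    forall (n : nat) (Y : nat -> Z),
      (1 <= n)%nat -> srw_path Y -> event_A d1 d2 Y n ->
      Rabs (I0 d2 d3 Y n) <= C * Rpower (INR n) (- (3/4) + d1 / 2).
Proof.
  intros H1 H2 H3 H4. exists (2 * PI). intros n Y Hn HY [HA HB].
  set (N := INR n) in *.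
  assert (HN : 1 <= N) by (unfold N; apply (le_INR 1); exact Hn).
  set (M := Rpower N (1/2 + d1)) in *.
  assert (HM : 1 <= M) by (unfold M; rewrite <- (Rpower_O N) at 1 by lra; apply Rle_Rpower; lra).
  set (L := Rpower N (1/2 + d2)) in *.
  set (D := d_n3 d3 n).
  assert (HD : D = Rpower N (1/2 + d3)) by reflexivity.
  assert (HDp : 0 < D) by (rewrite HD; apply Rpower_pos).
  set (b := b_n d2 d3 n).
  assert (Hbd : b = Rpower N d2 / D) by reflexivity.
  assert (Hb : 0 < b) by (rewrite Hbd; apply Rdiv_lt_0_compat; [apply Rpower_pos|exact HDp]).
  assert (HLb : L * b <= 1).
  { rewrite Hbd. unfold Rdiv. rewrite <- Rmult_assoc.
    assert (E : L * Rpower N d2 = Rpower N (1/2 + d2 + d2)) by (unfold L; rewrite <- Rpower_plus; reflexivity).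
    rewrite E. apply (Rmult_le_reg_r D); [exact HDp|]. rewrite Rmult_assoc, Rinv_l by lra.
    rewrite Rmult_1_r, Rmult_1_l, HD. apply Rle_Rpower; lra. }
  set (S := lsum (sites n) (fun y => eta Y n y ^ 2)).
  assert (HS : 4 * N ^ 2 <= 3 * M * S) by (apply S_lower; auto).
  set (a := S / 4).
  assert (HN2 : 0 < N ^ 2) by nra.
  assert (Ha : 0 < a) by (unfold a; nra).
  set (f := fun t => prod_cos Y n t * exp (- (t ^ 2 * D ^ 2) / 2)).
  assert (Hpt : forall t, - b <= t <= b -> norm (f t) <= 1 / (1 + a * t ^ 2)).
  { intros t Ht. change (norm (f t)) with (Rabs (f t)).
    assert (Hta : Rabs t <= b) by (unfold Rabs; destruct Rcase_abs; lra).
    destruct (prod_bound (sites n) (fun y => cos (eta Y n y * t)) (fun y => (eta Y n y * t) ^ 2 / 4))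
      as [_ [HP1 HP2]].
    { intros y _. split; [pose proof (pow2_ge_0 (eta Y n y * t)); lra|].
      apply cos_small. rewrite Rabs_mult.
      assert (He0 : 0 <= eta Y n y) by apply pos_INR.
      rewrite (Rabs_pos_eq (eta Y n y)) by exact He0.
      assert (HeL : eta Y n y < L) by apply HB.
      apply Rle_trans with (L * b); [|exact HLb].
      apply Rmult_le_compat; try lra. apply Rabs_pos. }
    rewrite (lsum_ext _ _ (fun y => t ^ 2 / 4 * eta Y n y ^ 2)) in HP2
      by (intros; simpl; field).
    rewrite lsum_scal in HP2. fold S in HP2.
    replace (t ^ 2 / 4 * S) with (a * t ^ 2) in HP2 by (unfold a; field).
    unfold f, prod_cos. unfold eta in HP1, HP2.
    set (P := fold_right Rmult 1 _) in *.
    assert (HE : 0 < exp (- (t ^ 2 * D ^ 2) / 2)) by apply exp_pos.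
    assert (HE1 : exp (- (t ^ 2 * D ^ 2) / 2) <= 1).
    { apply exp_le_1. pose proof (pow2_ge_0 t). pose proof (pow2_ge_0 D). nra. }
    rewrite Rabs_pos_eq by nra. nra. }
  assert (Hex : ex_RInt f (- b) b).
  { apply (@ex_RInt_continuous R_CompleteNormedModule). intros z _. apply (@ex_derive_continuous R_AbsRing R_NormedModule f z).
    unfold f, prod_cos. apply ex_derive_mult; [apply prod_derive|]. auto_derive. trivial. }
  pose proof (norm_RInt_le f (fun t => 1 / (1 + a * t ^ 2)) (- b) b _ _
                ltac:(lra) Hpt (RInt_correct _ _ _ Hex) (atan_int a b Ha ltac:(lra))) as HI.
  change (norm (RInt f (- b) b)) with (Rabs (RInt f (- b) b)) in HI.
  assert (HI0 : I0 d2 d3 Y n = RInt f (- b) b) by reflexivity.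
  rewrite HI0.
  set (r := sqrt a) in *.
  assert (Hr : 0 < r) by (apply sqrt_lt_R0; exact Ha).
  assert (Hr2 : r * r = a) by (apply sqrt_sqrt; lra).
  assert (HI2 : Rabs (RInt f (- b) b) <= PI / r).
  { eapply Rle_trans; [exact HI|]. apply Rmult_le_compat_r; [left; apply Rinv_0_lt_compat; lra|].
    pose proof (atan_bound (r * b)). pose proof (atan_bound (r * - b)). lra. }
  set (p := Rpower N (- (3/4) + d1 / 2)).
  assert (Hp : 0 < p) by apply Rpower_pos.
  assert (Hpp : p * p = Rpower N (- (3/2) + d1)) by (unfold p; rewrite <- Rpower_plus; f_equal; lra).
  assert (HMe : M = Rpower N (- (3/2) + d1) * Rpower N 1 * Rpower N 1)
    by (unfold M; rewrite <- !Rpower_plus; f_equal; lra).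
  rewrite Rpower_1 in HMe by lra. rewrite <- Hpp in HMe.
  assert (Hpa : 1 / 3 <= p * p * a).
  { assert (12 * M * (p * p * a) = p * p * (3 * M * S)) by (unfold a; field).
    assert (p * p * (4 * N ^ 2) <= p * p * (3 * M * S)) by (apply Rmult_le_compat_l; nra).
    assert (p * p * (4 * N ^ 2) = 4 * M) by (rewrite HMe; ring).
    nra. }
  assert (Hq : (p * r) * (p * r) = p * p * a) by (rewrite <- Hr2; ring).
  assert (Hpr0 : 0 < p * r) by nra.
  assert (Hpr : 1 / 2 <= p * r) by (destruct (Rle_lt_dec (1/2) (p*r)); [auto|nra]).
  eapply Rle_trans; [exact HI2|].
  apply (Rmult_le_reg_r r); [exact Hr|].
  replace (PI / r * r) with PI by (field; lra).
  pose proof PI_RGT_0. nra.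
Qed.
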